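(* Let $(\mathbf f,\mathbf g),(\mathbf f',\mathbf g')$ be models with $p=p_{\mathbf f,\mathbf g}$, $p'=p_{\mathbf f',\mathbf g'}$, and assume: (1) distinct labels $y_1,\dots,y_M\in\mathcal Y_{\mathrm{LLV}}\setminus\{y_0\}$ and distinct inputs $x_1,\dots,x_M\in\mathcal X_{\mathrm{LLV}}\setminus\{x_0\}$ are chosen such that $\mathbf L=[\mathbf g_0(y_1),\dots,\mathbf g_0(y_M)]$, $\mathbf L'=[\mathbf g'_0(y_1),\dots,\mathbf g'_0(y_M)]$, $\mathbf N=[\mathbf f_0(x_1),\dots,\mathbf f_0(x_M)]$, $\mathbf N'=[\mathbf f'_0(x_1),\dots,\mathbf f'_0(x_M)]$ are all invertible; (2) $p$ and $p'$ are both admissible; (3) with $x\sim p_{\mathcal D}$ and $y$ uniform on $\mathcal Y$, and $\mathbf z_1=\mathbf L^\top\mathbf f(x)$, $\mathbf z_2=\mathbf L'^\top\mathbf f'(x)$, $\mathbf w_1=\mathbf N^\top\mathbf g(y)$, $\mathbf w_2=\mathbf N'^\top\mathbf g'(y)$, the covariance matrices of the standardized vectors $\boldsymbol\Sigma_{\mathbf z_1'\mathbf z_1'},\boldsymbol\Sigma_{\mathbf w_1'\mathbf w_1'}$ and cross-covariance matrices $\boldsymbol\Sigma_{\mathbf z_1'\mathbf z_2'},\boldsymbol\Sigma_{\mathbf w_1'\mathbf w_2'}$ are non-singular. Then for every $\lambda>0$ and $\epsilon\ge0$, $$d^\lambda_{\mathrm{LLV}}(p,p')\le\epsilon\ \Longrightarrow\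 \max\big\{d_{\mathrm{SVD}}(\mathbf z_1,\mathbf z_2),\,d_{\mathrm{SVD}}(\mathbf w_1,\mathbf w_2)\big\}\le 2M\epsilon .$$
   Context: Let $\mathcal X$ be a set of inputs and $\mathcal Y$ a finite set of labels; fix $M\ge 1$. A model is a pair $(\mathbf f,\mathbf g)$ of functions $\mathbf f:\mathcal X\to\mathbb R^M$ (embedding) and $\mathbf g:\mathcal Y\to\mathbb R^M$ (unembedding); it defines $p_{\mathbf f,\mathbf g}(y\mid x)=\exp(\mathbf f(x)^\top\mathbf g(y))/\sum_{y'\in\mathcal Y}\exp(\mathbf f(x)^\top\mathbf g(y'))$. With pivot input $x_0$ and pivot label $y_0$, write $\mathbf f_0(x)=\mathbf f(x)-\mathbf f(x_0)$, $\mathbf g_0(y)=\mathbf g(y)-\mathbf g(y_0)$ (similarly primed). Fix a probability distribution $p_{\mathcal D}$ on $\mathcal X$; $\mathrm{Var}_x$ denotes variance with $x\sim p_{\mathcal D}$ and $\mathrm{Var}_y$ variance with $y$ uniform on $\mathcal Y$. Fix a finite set $\mathcal X_{\mathrm{LLV}}\subset\mathcal X$ containing $x_0$, and a set $\mathcal Y_{\mathrm{LLV}}\subset\mathcal Y$ containing $y_0$ and all labels of $\mathcal Y$ except exactly one. Consider conditional distributions $p(\cdot\mid x)$ on $\mathcal Y$ with all probabilities positive and $\log p(y\mid\cdot)$ square-integrable under $p_{\mathcal D}$. Define $\psi_x(y;p)=\sqrt{\mathrm{Var}_x[\log p(y\mid x)-\log p(y_0\mid x)]}$ and $\psi_y(x;p)=\sqrt{\mathrm{Var}_y[\log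 p(y\mid x)-\log p(y\mid x_0)]}$. Such a $p$ is admissible if (1) $p_{\mathcal D}(\{x\})>0$ for every $x\in\mathcal X_{\mathrm{LLV}}$, and for every $x\in\mathcal X_{\mathrm{LLV}}\setminus\{x_0\}$ the map $y\mapsto\log p(y\mid x)-\log p(y\mid x_0)$ is not constant on $\mathcal Y$; and (2) for every $y\in\mathcal Y_{\mathrm{LLV}}\setminus\{y_0\}$, $\mathrm{Var}_x[\log p(y\mid x)-\log p(y_0\mid x)]>0$. For admissible $p,p'$ and $\lambda>0$ define $t_1=\max_{y\in\mathcal Y_{\mathrm{LLV}}\setminus\{y_0\}}\max\Big\{\sqrt{\mathrm{Var}_x\big[\tfrac{\log p(y\mid x)}{\psi_x(y;p)}-\tfrac{\log p'(y\mid x)}{\psi_x(y;p')}\big]},\ \sqrt{\mathrm{Var}_x\big[\tfrac{\log p(y_0\mid x)}{\psi_x(y;p)}-\tfrac{\log p'(y_0\mid x)}{\psi_x(y;p')}\big]}\Big\}$, $t_2=\max_{x\in\mathcal X_{\mathrm{LLV}}\setminus\{x_0\}}\max\Big\{\sqrt{\mathrm{Var}_y\big[\tfrac{\log p(y\mid x)}{\psi_y(x;p)}-\tfrac{\log p'(y\mid x)}{\psi_y(x;p')}\big]},\ \sqrt{\mathrm{Var}_y\big[\tfrac{\log p(y\mid x_0)}{\psi_y(x;p)}-\tfrac{\log p'(y\mid x_0)}{\psi_y(x;p')}\big]}\Big\}$, $t_3=\max_{y\in\mathcal Y_{\mathrm{LLV}}\setminus\{y_0\}}|\psi_x(y;p)-\psi_x(y;p')|$,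 $t_4=\max_{x\in\mathcal X_{\mathrm{LLV}}\setminus\{x_0\}}|\psi_y(x;p)-\psi_y(x;p')|$, and $d^\lambda_{\mathrm{LLV}}(p,p')=\max\{t_1,t_2,\lambda t_3,\lambda t_4\}$. For $M$-dimensional random vectors $\mathbf z,\mathbf w$ (jointly distributed, components with finite positive variance), let $\mathbf z',\mathbf w'$ be the standardized vectors $z'_i=(z_i-\mathbb E[z_i])/\operatorname{std}(z_i)$, $w'_i=(w_i-\mathbb E[w_i])/\operatorname{std}(w_i)$, and let $\boldsymbol\Sigma_{\mathbf z'\mathbf w'}$ be the cross-covariance matrix with entries $\mathrm{Cov}[z'_i,w'_j]$. Let $\{\mathbf u_i\}_{i=1}^M$, $\{\mathbf v_i\}_{i=1}^M$ be the left and right singular vectors of $\boldsymbol\Sigma_{\mathbf z'\mathbf w'}$. Define $m_{\mathrm{SVD}}(\mathbf z,\mathbf w)=\frac1M\sum_{i=1}^M\mathrm{Cov}[\mathbf u_i^\top\mathbf z',\mathbf v_i^\top\mathbf w']$ (equivalently, $\frac1M$ times the sum of the singular values of $\boldsymbol\Sigma_{\mathbf z'\mathbf w'}$) and $d_{\mathrm{SVD}}(\mathbf z,\mathbf w)=1-m_{\mathrm{SVD}}(\mathbf z,\mathbf w)$. *)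

(* Defs.v *)
From HB Require Import structures.
From mathcomp Require Import all_boot all_order all_algebra.
From mathcomp Require Import all_classical all_reals all_analysis.
Set Implicit Arguments. Unset Strict Implicit. Unset Printing Implicit Defensive.
Import Order.TTheory GRing.Theory Num.Theory.
Local Open Scope classical_set_scope.
Local Open Scope ring_scope.

Section Defs.
Context {R : realType}.

Definition dotv {M : nat} (u v : 'rV[R]_M) : R := \sum_(i < M) u ord0 i * v ord0 i.

Definition model_p {X : Type} {Y : finType} {M : nat}
  (f : X -> 'rV[R]_M) (g : Y -> 'rV[R]_M) (x : X) (y : Y) : R :=
  expR (dotv (f x) (g y)) / \sum_(y' : Y) expR (dotv (f x) (g y')).

Definition Var_x {d} {X : measurableType d} (P : probability X R) (h : X -> R) : R :=
  fine ('V_P[h])%E.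

Definition E_unif {Y : finType} (h : Y -> R) : R := (#|Y|%:R)^-1 * \sum_(y : Y) h y.
Definition Var_y {Y : finType} (h : Y -> R) : R := E_unif (fun y => (h y - E_unif h) ^+ 2).

Definition sq_integrable {d} {X : measurableType d} (P : probability X R) (h : X -> R) :=
  measurable_fun setT h /\ P.-integrable setT (fun x => (h x ^+ 2)%:E).

Definition cond_dist_ok {d} {X : measurableType d} {Y : finType}
  (P : probability X R) (p : X -> Y -> R) :=
  (forall x y, 0 < p x y) /\ (forall y, sq_integrable P (fun x => ln (p x y))).

Definition admissible {d} {X : measurableType d} {Y : finType}
  (P : probability X R) (XLLV : seq X) (YLLV : {set Y}) (x0 : X) (y0 : Y)
  (p : X -> Y -> R) : Prop :=
  cond_dist_ok P p /\
  ((forall x, x \in XLLV -> measurable [set x] /\ (0 < P [set x])%E) /\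
   (forall x, x \in XLLV -> x != x0 ->
      ~ (exists c, forall y, ln (p x y) - ln (p x0 y) = c))) /\
  (forall y, y \in YLLV :\ y0 -> 0 < Var_x P (fun x => ln (p x y) - ln (p x y0))).

Definition psi_x {d} {X : measurableType d} {Y : finType}
  (P : probability X R) (y0 : Y) (p : X -> Y -> R) (y : Y) : R :=
  Num.sqrt (Var_x P (fun x => ln (p x y) - ln (p x y0))).

Definition psi_y {X : Type} {Y : finType} (x0 : X) (p : X -> Y -> R) (x : X) : R :=
  Num.sqrt (Var_y (fun y => ln (p x y) - ln (p x0 y))).

Definition t1 {d} {X : measurableType d} {Y : finType} (P : probability X R)
  (YLLV : {set Y}) (y0 : Y) (p p' : X -> Y -> R) : R :=
  \big[Num.max/0]_(y in YLLV :\ y0)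
    Num.max
      (Num.sqrt (Var_x P (fun x => ln (p x y) / psi_x P y0 p y
                               - ln (p' x y) / psi_x P y0 p' y)))
      (Num.sqrt (Var_x P (fun x => ln (p x y0) / psi_x P y0 p y
                               - ln (p' x y0) / psi_x P y0 p' y))).

Definition t2 {X : eqType} {Y : finType} (XLLV : seq X) (x0 : X)
  (p p' : X -> Y -> R) : R :=
  \big[Num.max/0]_(x <- XLLV | x != x0)
    Num.max
      (Num.sqrt (Var_y (fun y => ln (p x y) / psi_y x0 p x
                               - ln (p' x y) / psi_y x0 p' x)))
      (Num.sqrt (Var_y (fun y => ln (p x0 y) / psi_y x0 p x
                               - ln (p' x0 y) / psi_y x0 p' x))).

Definition t3 {d} {X : measurableType d} {Y : finType} (P : probability X R)
  (YLLV : {set Y}) (y0 : Y) (p p' : X -> Y -> R) : R :=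
  \big[Num.max/0]_(y in YLLV :\ y0) `|psi_x P y0 p y - psi_x P y0 p' y|.

Definition t4 {X : eqType} {Y : finType} (XLLV : seq X) (x0 : X)
  (p p' : X -> Y -> R) : R :=
  \big[Num.max/0]_(x <- XLLV | x != x0) `|psi_y x0 p x - psi_y x0 p' x|.

Definition d_LLV {d} {X : measurableType d} {Y : finType} (P : probability X R)
  (XLLV : seq X) (YLLV : {set Y}) (x0 : X) (y0 : Y) (lam : R)
  (p p' : X -> Y -> R) : R :=
  Num.max (Num.max (t1 P YLLV y0 p p') (t2 XLLV x0 p p'))
          (Num.max (lam * t3 P YLLV y0 p p') (lam * t4 XLLV x0 p p')).

Definition covE {T : Type} (E : (T -> R) -> R) (a b : T -> R) : R :=
  E (fun t => (a t - E a) * (b t - E b)).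
Definition stdE {T : Type} (E : (T -> R) -> R) (a : T -> R) : R := Num.sqrt (covE E a a).
Definition stdzE {T : Type} {M : nat} (E : (T -> R) -> R) (z : T -> 'rV[R]_M) (i : 'I_M)
  : T -> R := fun t => (z t ord0 i - E (fun s => z s ord0 i)) / stdE E (fun s => z s ord0 i).
Definition crosscov {T : Type} {M : nat} (E : (T -> R) -> R) (z w : T -> 'rV[R]_M)
  : 'M[R]_M := \matrix_(i, j) covE E (stdzE E z i) (stdzE E w j).

Definition is_svd {M : nat} (A U : 'M[R]_M) (s : 'rV[R]_M) (V : 'M[R]_M) : Prop :=
  U^T *m U = 1%:M /\ V^T *m V = 1%:M /\ (forall i, 0 <= s ord0 i) /\
  A = U *m diag_mx s *m V^T.

Definition m_SVD {T : Type} {M : nat} (E : (T -> R) -> R) (z w : T -> 'rV[R]_M)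
  (U V : 'M[R]_M) : R :=
  (M%:R)^-1 * \sum_(i < M)
     covE E (fun t => \sum_(k < M) U k i * stdzE E z k t)
            (fun t => \sum_(k < M) V k i * stdzE E w k t).
Definition d_SVD {T : Type} {M : nat} (E : (T -> R) -> R) (z w : T -> 'rV[R]_M)
  (U V : 'M[R]_M) : R := 1 - m_SVD E z w U V.

Definition E_x {d} {X : measurableType d} (P : probability X R) (h : X -> R) : R :=
  fine ('E_P[h])%E.

End Defs.

(* Main.v *)
Require Import Defs.
From HB Require Import structures.
From mathcomp Require Import all_boot all_order all_algebra.
From mathcomp Require Import all_classical all_reals all_analysis.
From mathcomp Require Import ring lra.
Import Order.TTheory GRing.Theory Num.Theory.
Set Implicit Arguments. Unset Strict Implicit. Unset Printing Implicit Defensive.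
Local Open Scope classical_set_scope.
Local Open Scope ring_scope.

Lemma orth_col {R : realType} (M : nat) (U : 'M[R]_M) j :
  U^T *m U = 1%:M -> \sum_i U i j ^+ 2 = 1.
Proof.
move=> hU; have := congr1 (fun A : 'M[R]_M => A j j) hU.
rewrite !mxE eqxx mulr1n => <-; apply: eq_bigr => i _; rewrite mxE; ring.
Qed.

Lemma trace_le_svd {R : realType} (M : nat) (Cm U V : 'M[R]_M) (s : 'rV[R]_M) :
  is_svd Cm U s V -> \sum_i Cm i i <= \sum_i s ord0 i.
Proof.
move=> [hU [hV [hs eC]]].
have -> : \sum_i Cm i i = \sum_j s ord0 j * \sum_i U i j * V i j.
  rewrite eC.
  transitivity (\sum_i \sum_j s ord0 j * (U i j * V i j)).
    apply: eq_bigr => i _; rewrite mxE; apply: eq_bigr => j _.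
    rewrite mul_mx_diag !mxE; ring.
  rewrite exchange_big /=; apply: eq_bigr => j _; by rewrite mulr_sumr.
apply: ler_sum => j _.
rewrite -[leRHS]mulr1; apply: ler_wpM2l => //.
have h1 := orth_col j hU; have h2 := orth_col j hV.
have : \sum_i U i j * V i j <= \sum_i (U i j ^+ 2 + V i j ^+ 2) / 2.
  apply: ler_sum => i _; have h := sqr_ge0 (U i j - V i j); rewrite sqrrB in h; lra.
rewrite -mulr_suml big_split /= h1 h2 => h; apply: (le_trans h); lra.
Qed.

Lemma UCV_diag {R : realType} (M : nat) (Cm U V : 'M[R]_M) (s : 'rV[R]_M) :
  is_svd Cm U s V -> forall i,
  \sum_k \sum_l U k i * V l i * Cm k l = s ord0 i.
Proof.
move=> [hU [hV [hs eC]]] i.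
have : (U^T *m Cm *m V) i i = s ord0 i.
  rewrite eC mulmxA mulmxA hU mul1mx -mulmxA hV mulmx1 mxE eqxx /=; ring.
rewrite mxE => <-.
rewrite exchange_big /=; apply: eq_bigr => l _.
rewrite mxE mulr_suml; apply: eq_bigr => k _; rewrite mxE; ring.
Qed.

Definition cov_ok {R : realType} {T : Type} (E : (T -> R) -> R) (G : (T -> R) -> Prop) : Prop :=
 [/\ (forall c, G (fun _ => c)),
  (forall k a b, G a -> G b -> G (fun t => k * a t + b t)),
  (forall k a b h, G a -> G b -> G h ->
     covE E (fun t => k * a t + b t) h = k * covE E a h + covE E b h),
  (forall c h, G h -> covE E (fun _ => c) h = 0) &
  (forall a b, G a -> G b -> covE E a b = covE E b a) /\
  (forall a, G a -> 0 <= covE E a a)].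

Section abs.
Context {R : realType} {T : Type} (E : (T -> R) -> R) (G : (T -> R) -> Prop)
  (ok : cov_ok E G).
Local Notation C := (covE E).

Lemma G_cst c : G (fun _ => c). Proof. by case: ok => H _ _ _ _. Qed.
Lemma G_lin k a b : G a -> G b -> G (fun t => k * a t + b t). Proof. by case: ok => _ H _ _ _; apply: H. Qed.
Lemma C_lin k a b h : G a -> G b -> G h ->
     C (fun t => k * a t + b t) h = k * C a h + C b h. Proof. by case: ok => _ _ H _ _; apply: H. Qed.
Lemma C_cst c h : G h -> C (fun _ => c) h = 0. Proof. by case: ok => _ _ _ H _; apply: H. Qed.
Lemma C_sym a b : G a -> G b -> C a b = C b a. Proof. by case: ok => _ _ _ _ [H H']; auto. Qed.
Lemma C_pos a : G a -> 0 <= C a a. Proof. by case: ok => _ _ _ _ [H H']; auto. Qed.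

Lemma G_ext a b : (forall t, a t = b t) -> G a -> G b.
Proof. by move=> /funext ->. Qed.

Lemma G_comb2 al be ka u v : G u -> G v -> G (fun t => al * u t + be * v t + ka).
Proof.
move=> Gu Gv; apply: (@G_ext (fun t => al * u t + (be * v t + (1 * (fun _ => ka) t)))).
  by move=> t /=; rewrite mul1r addrA.
apply: (@G_lin al u (fun t => be * v t + 1 * ka)) => //.
apply: (@G_lin be v (fun t => 1 * ka)) => //.
apply: (@G_ext (fun t => 1 * (fun _ => ka) t + (fun _ => 0) t)); first by move=> t; rewrite addr0.
by apply: G_lin; apply: G_cst.
Qed.

Lemma C_comb2l al be ka u v h : G u -> G v -> G h ->
  C (fun t => al * u t + be * v t + ka) h = al * C u h + be * C v h.
Proof.
move=> Gu Gv Gh.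
have -> : (fun t => al * u t + be * v t + ka) =
   (fun t => al * u t + (fun t => be * v t + (fun t => 1 * (fun _ => ka) t + (fun _ => 0) t) t) t).
  by apply: funext => t /=; rewrite mul1r addr0 addrA.
have G1 : G (fun t => 1 * (fun _ => ka) t + (fun _ => 0) t) by apply: G_lin; apply: G_cst.
have G2 : G (fun t => be * v t + (fun t => 1 * (fun _ => ka) t + (fun _ => 0) t) t).
  exact: (@G_lin be v (fun t => 1 * (fun _ => ka) t + (fun _ => 0) t)).
rewrite (@C_lin al u (fun t => be * v t + (fun t => 1 * (fun _ => ka) t + (fun _ => 0) t) t)) //.
rewrite (@C_lin be v (fun t => 1 * (fun _ => ka) t + (fun _ => 0) t)) //.
by rewrite C_lin ?C_cst; try apply: G_cst; rewrite // mulr0 !addr0.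
Qed.

Lemma C_comb2 al be ka u v : G u -> G v ->
  C (fun t => al * u t + be * v t + ka) (fun t => al * u t + be * v t + ka) =
  al ^+ 2 * C u u + 2 * al * be * C u v + be ^+ 2 * C v v.
Proof.
move=> Gu Gv; have Gw := G_comb2 al be ka Gu Gv.
rewrite C_comb2l // (C_sym Gu Gw) (C_sym Gv Gw) !C_comb2l // (C_sym Gv Gu); ring.
Qed.

Lemma C_ext a b h : (forall t, a t = b t) -> C a h = C b h.
Proof. by move=> /funext ->. Qed.
Lemma C_extr a b h : (forall t, a t = b t) -> C h a = C h b.
Proof. by move=> /funext ->. Qed.


Lemma sqrt_le_sq (x e : R) : 0 <= x -> 0 <= e -> Num.sqrt x <= e -> x <= e ^+ 2.
Proof.
move=> x0 e0 h; rewrite -(sqr_sqrtr x0).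
by rewrite lerXn2r // ?nnegrE ?sqrtr_ge0.
Qed.

Lemma key (A1 A0 B1 B0 a b : T -> R) (ka kb eps : R) :
 G A1 -> G A0 -> G B1 -> G B0 ->
 (forall t, a t = A1 t - A0 t + ka) -> (forall t, b t = B1 t - B0 t + kb) ->
 0 < C (fun t => A1 t - A0 t) (fun t => A1 t - A0 t) ->
 0 < C (fun t => B1 t - B0 t) (fun t => B1 t - B0 t) ->
 let sa := Num.sqrt (C (fun t => A1 t - A0 t) (fun t => A1 t - A0 t)) in
 let sb := Num.sqrt (C (fun t => B1 t - B0 t) (fun t => B1 t - B0 t)) in
 Num.sqrt (C (fun t => A1 t / sa - B1 t / sb) (fun t => A1 t / sa - B1 t / sb)) <= eps ->
 Num.sqrt (C (fun t => A0 t / sa - B0 t / sb) (fun t => A0 t / sa - B0 t / sb)) <= eps ->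
 1 - C (fun t => (a t - E a) / stdE E a) (fun t => (b t - E b) / stdE E b) <= 2 * eps.
Proof.
move=> GA1 GA0 GB1 GB0 ea eb Va0 Vb0 sa sb h1 h0.
set u := (fun t => A1 t - A0 t).
set w := (fun t => B1 t - B0 t).
have eu : u = (fun t => 1 * A1 t + (-1) * A0 t + 0).
  by apply: funext => t; rewrite /u; ring.
have ew : w = (fun t => 1 * B1 t + (-1) * B0 t + 0).
  by apply: funext => t; rewrite /w; ring.
have Gu : G u by rewrite eu; apply: G_comb2.
have Gw : G w by rewrite ew; apply: G_comb2.
have Ca : C a a = C u u.
  have -> : a = (fun t => 1 * A1 t + (-1) * A0 t + ka).
    by apply: funext => t; rewrite ea; ring.
  by rewrite eu !C_comb2.
have Cb : C b b = C w w.
  have -> : b = (fun t => 1 * B1 t + (-1) * B0 t + kb).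
    by apply: funext => t; rewrite eb; ring.
  by rewrite ew !C_comb2.
have sa0 : 0 < sa by rewrite sqrtr_gt0.
have sb0 : 0 < sb by rewrite sqrtr_gt0.
have sa2 : sa ^+ 2 = C u u by rewrite sqr_sqrtr // ltW.
have sb2 : sb ^+ 2 = C w w by rewrite sqr_sqrtr // ltW.
rewrite /stdE Ca Cb -/sa -/sb.
set X := (fun t => (a t - E a) / sa).
set Y := (fun t => (b t - E b) / sb).
have eX : X = (fun t => sa^-1 * u t + 0 * u t + (ka - E a) / sa).
  by apply: funext => t; rewrite /X /u ea; ring.
have eY : Y = (fun t => sb^-1 * w t + 0 * w t + (kb - E b) / sb).
  by apply: funext => t; rewrite /Y /w eb; ring.
have GX : G X by rewrite eX; apply: G_comb2.
have GY : G Y by rewrite eY; apply: G_comb2.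
have CX : C X X = 1.
  rewrite eX C_comb2 // -sa2; field; by rewrite gt_eqF.
have CY : C Y Y = 1.
  rewrite eY C_comb2 // -sb2; field; by rewrite gt_eqF.
set D1 := (fun t => A1 t / sa - B1 t / sb).
set D0 := (fun t => A0 t / sa - B0 t / sb).
have GD1 : G D1.
  have -> : D1 = (fun t => sa^-1 * A1 t + (- sb^-1) * B1 t + 0).
    by apply: funext => t; rewrite /D1; ring.
  exact: G_comb2.
have GD0 : G D0.
  have -> : D0 = (fun t => sa^-1 * A0 t + (- sb^-1) * B0 t + 0).
    by apply: funext => t; rewrite /D0; ring.
  exact: G_comb2.
have eXY : (fun t => 1 * X t + (-1) * Y t + 0) =
           (fun t => 1 * D1 t + (-1) * D0 t + ((ka - E a) / sa - (kb - E b) / sb)).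
  by apply: funext => t; rewrite /X /Y /D1 /D0 ea eb; ring.
have H1 := C_comb2 1 (-1) 0 GX GY.
rewrite eXY C_comb2 // in H1.
have P1 := C_pos (G_comb2 1 1 0 GD1 GD0).
rewrite C_comb2 // in P1.
have P2 := C_pos (G_comb2 1 1 0 GX GY).
rewrite C_comb2 // CX CY in P2.
rewrite CX CY in H1.
have e0 : 0 <= eps by apply: le_trans h1; apply: sqrtr_ge0.
have q1 := sqrt_le_sq (C_pos GD1) e0 h1.
have q0 := sqrt_le_sq (C_pos GD0) e0 h0.
have r1 : 1 - C X Y <= 2 * eps ^+ 2.
  move: H1 P1 P2 q1 q0; rewrite !expr1n sqrrN expr1n !mul1r !mulr1. lra.
have r2 : 1 - C X Y <= 2.
  move: P2; rewrite !expr1n !mul1r !mulr1; lra.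
have [e1|e1] := lerP eps 1.
  have := ler_wpM2l e0 e1; rewrite mulr1 -expr2 => e2; lra.
lra.
Qed.


Lemma G_sum (I : Type) (r : seq I) (al : I -> R) (F : I -> T -> R) :
  (forall k, G (F k)) -> G (fun t => \sum_(k <- r) al k * F k t).
Proof.
move=> GF; elim: r => [|x r IH].
  by apply: (@G_ext (fun _ => 0)) => [t|]; rewrite ?big_nil //; apply: G_cst.
apply: (@G_ext (fun t => al x * F x t + (fun t => \sum_(k <- r) al k * F k t) t)).
  by move=> t; rewrite big_cons.
exact: G_lin.
Qed.

Lemma C_sumL (I : Type) (r : seq I) (al : I -> R) (F : I -> T -> R) h :
  (forall k, G (F k)) -> G h ->
  C (fun t => \sum_(k <- r) al k * F k t) h = \sum_(k <- r) al k * C (F k) h.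
Proof.
move=> GF Gh; elim: r => [|x r IH].
  by rewrite big_nil (@C_ext _ (fun _ => 0)) => [|t]; rewrite ?big_nil // C_cst.
rewrite big_cons -IH.
rewrite (@C_ext _ (fun t => al x * F x t + (fun t => \sum_(k <- r) al k * F k t) t)).
  by rewrite C_lin //; apply: G_sum.
by move=> t; rewrite big_cons.
Qed.

Lemma C_sumR (I : Type) (r : seq I) (al : I -> R) (F : I -> T -> R) h :
  (forall k, G (F k)) -> G h ->
  C h (fun t => \sum_(k <- r) al k * F k t) = \sum_(k <- r) al k * C h (F k).
Proof.
move=> GF Gh; rewrite C_sym //; last exact: G_sum.
rewrite C_sumL //; apply: eq_bigr => k _; by rewrite C_sym.
Qed.

Lemma dsvd_bound (M : nat) (z w : T -> 'rV[R]_M) U V s eps :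
  (0 < M)%N -> (forall k, G (stdzE E z k)) -> (forall k, G (stdzE E w k)) ->
  is_svd (crosscov E z w) U s V ->
  (forall k, 1 - C (stdzE E z k) (stdzE E w k) <= 2 * eps) -> 0 <= eps ->
  d_SVD E z w U V <= 2 * M%:R * eps.
Proof.
move=> M0 Gz Gw hs hk e0.
have Msum : \sum_i C (fun t => \sum_k U k i * stdzE E z k t)
                     (fun t => \sum_k V k i * stdzE E w k t) = \sum_i s ord0 i.
  apply: eq_bigr => i _; rewrite -(UCV_diag hs i).
  rewrite C_sumL //; last exact: G_sum.
  apply: eq_bigr => k _; rewrite C_sumR // mulr_sumr; apply: eq_bigr => l _.
  by rewrite mxE; ring.
have tr := trace_le_svd hs.
have Mpos : 0 < M%:R :> R by rewrite ltr0n.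
have : \sum_(i < M) (1 - crosscov E z w i i) <= \sum_(i < M) 2 * eps.
  by apply: ler_sum => i _; rewrite mxE.
rewrite big_split /= sumrN !sumr_const !card_ord -[(2 * eps) *+ _]mulr_natr => h.
rewrite /d_SVD /m_SVD Msum.
set S := \sum_i s ord0 i in tr *.
have hS : M%:R * (1 - 2 * eps) <= S.
  apply: le_trans tr; lra.
have hS' : M%:R^-1 * (M%:R * (1 - 2 * eps)) <= M%:R^-1 * S.
  by apply: ler_wpM2l => //; rewrite invr_ge0 ltW.
rewrite mulrA mulVf ?gt_eqF // mul1r in hS'.
have M1 : 1 <= M%:R :> R by rewrite ler1n.
have := ler_wpM2l e0 M1; rewrite mulr1 => hM.
rewrite -mulrA (mulrC M%:R) mulrA; lra.
Qed.
Lemma G_stdz (M : nat) (z : T -> 'rV[R]_M) k :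
  G (fun t => z t ord0 k) -> G (stdzE E z k).
Proof.
move=> Gz.
apply: (@G_ext (fun t => (stdE E (fun s => z s ord0 k))^-1 * (fun s => z s ord0 k) t
   + 0 * (fun s => z s ord0 k) t + (- E (fun s => z s ord0 k)) / stdE E (fun s => z s ord0 k))).
  by move=> t; rewrite /stdzE; ring.
exact: G_comb2.
Qed.

Lemma G_diff c A1 A0 : G A1 -> G A0 -> G (fun t => A1 t - A0 t + c).
Proof.
move=> G1 G0; apply: (@G_ext (fun t => 1 * A1 t + (-1) * A0 t + c)).
  by move=> t; ring.
exact: G_comb2.
Qed.

End abs.

Lemma covE_x {R : realType} d (X : measurableType d) (P : probability X R) a b :
  covE (E_x P) a b = fine (covariance P a b).
Proof. by rewrite /covE /E_x covariance.unlock. Qed.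

Lemma cov_ok_x {R : realType} d (X : measurableType d) (P : probability X R) :
  cov_ok (E_x P) (fun a => a \in Lfun P 2%:E).
Proof.
have Pfin : P setT \is a fin_num := fin_num_measure P _ measurableT.
have L21 := Lfun_subset12 Pfin.
have cfin : forall u v, u \in Lfun P 2%:E -> v \in Lfun P 2%:E -> covariance P u v \is a fin_num.
  move=> u v Gu Gv; apply: covariance_fin_num; [exact: L21|exact: L21|exact: Lfun2_mul_Lfun1].
split.
- by move=> c; apply: Lfun_cst.
- move=> k a b Ga Gb; move: Ga Gb; cbv beta => Ga Gb.
  have -> : (fun t => k * a t + b t) = ((k \o* a) + b)%R by apply: funext => t; rewrite !fctE /= mulrC.
  apply: rpredD => //; first by rewrite lee_fin ler1n.
  by move=> ?; apply: (Lfun_scale k _ Ga); rewrite ler1n.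
- move=> k a b h Ga Gb Gh; move: Ga Gb Gh; cbv beta => Ga Gb Gh.
  rewrite !covE_x.
  have -> : (fun t => k * a t + b t) = ((k \o* a) \+ b)%R by apply: funext => t; rewrite /= mulrC.
  have Gka : (k \o* a) \in Lfun P 2%:E by apply: (Lfun_scale k _ Ga); rewrite ler1n.
  rewrite covarianceDl // covarianceZl; [|exact: L21|exact: L21|exact: Lfun2_mul_Lfun1].
  rewrite fineD ?fin_numM ?cfin // fineM ?cfin //.
- by move=> c h _; rewrite covE_x covariance_cst_l.
split.
- by move=> a b _ _; rewrite !covE_x covarianceC.
- by move=> a _; rewrite covE_x fine_ge0 // (variance_ge0 P a).
Qed.

Lemma E_unif_lin {R : realType} (Y : finType) k (a b : Y -> R) :
  E_unif (fun t => k * a t + b t) = k * E_unif a + E_unif b.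
Proof. by rewrite /E_unif big_split /= -mulr_sumr; ring. Qed.

Lemma E_unif_cst {R : realType} (Y : finType) (y0 : Y) (c : R) :
  E_unif (fun _ : Y => c) = c.
Proof.
rewrite /E_unif sumr_const -[c *+ _]mulr_natl mulrA mulVf ?mul1r //.
by rewrite pnatr_eq0 -lt0n; apply/card_gt0P; exists y0.
Qed.

Lemma E_unif_ext {R : realType} (Y : finType) (a b : Y -> R) :
  (forall t, a t = b t) -> E_unif a = E_unif b.
Proof. by move=> /funext ->. Qed.

Lemma cov_ok_unif {R : realType} (Y : finType) (y0 : Y) :
  cov_ok (@E_unif R Y) (fun _ => True).
Proof.
split => //.
- move=> k a b h _ _ _; rewrite /covE E_unif_lin.
  rewrite (@E_unif_ext _ _ _ (fun t => k * ((a t - E_unif a) * (h t - E_unif h))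
       + (b t - E_unif b) * (h t - E_unif h))); first by rewrite E_unif_lin.
  by move=> t; ring.
- move=> c h _; rewrite /covE E_unif_cst //.
  rewrite (@E_unif_ext _ _ _ (fun _ => 0)) ?E_unif_cst // => t; ring.
split.
- by move=> a b _ _; rewrite /covE; apply: E_unif_ext => t; ring.
- move=> a _; rewrite /covE /E_unif mulr_ge0 // ?invr_ge0 //.
  by apply: sumr_ge0 => t _; rewrite -expr2 sqr_ge0.
Qed.

Lemma lnp {R : realType} {X : Type} {Y : finType} {M : nat} (y0 : Y)
  (f : X -> 'rV[R]_M) (g : Y -> 'rV[R]_M) x y :
  ln (model_p f g x y) = dotv (f x) (g y) - ln (\sum_(y' : Y) expR (dotv (f x) (g y'))).
Proof.
rewrite /model_p ln_div ?expRK // ?posrE ?expR_gt0 //.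
rewrite (bigD1 y0) //= ltr_pwDl ?expR_gt0 // sumr_ge0 // => ? _.
Qed.

Lemma sqint_L2 {R : realType} d (X : measurableType d) (P : probability X R) (h : X -> R) :
  sq_integrable P h -> h \in Lfun P 2%:E.
Proof.
move=> [mh ih]; rewrite inE; apply/andP; split; rewrite inE /=; first exact: mh.
rewrite /finite_norm unlock /=; apply: poweR_lty.
move/integrableP: ih => [_ ih].
apply: le_lt_trans ih; rewrite le_eqVlt; apply/orP; left; apply/eqP.
apply: eq_integral => x _.
rewrite gee0_abs ?lee_fin ?sqr_ge0 //; congr (_%:E).
by rewrite -[2]/(2%:R) powR_mulrn // real_normK // num_real.
Qed.

Lemma VarxE {R : realType} d (X : measurableType d) (P : probability X R) h :
  Var_x P h = covE (E_x P) h h.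
Proof. by rewrite covE_x. Qed.

Lemma VaryE {R : realType} (Y : finType) (h : Y -> R) :
  Var_y h = covE (@E_unif R Y) h h.
Proof. by rewrite /Var_y /covE; apply: E_unif_ext => t; rewrite expr2. Qed.

Lemma Vary_pos {R : realType} (Y : finType) (y0 : Y) (h : Y -> R) :
  ~ (exists c, forall y, h y = c) -> 0 < Var_y h.
Proof.
move=> nc; rewrite lt_def; apply/andP; split; last first.
  by rewrite VaryE; case: (@cov_ok_unif R Y y0) => _ _ _ _ [_ ]; apply.
apply/eqP => h0; apply: nc; exists (E_unif h) => y.
move: h0; rewrite /Var_y /E_unif => /eqP; rewrite mulf_eq0 invr_eq0 pnatr_eq0.
have cY : #|Y| != 0%N by rewrite -lt0n; apply/card_gt0P; exists y0.
rewrite (negbTE cY) /= psumr_eq0; last by move=> i _; apply: sqr_ge0.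
move=> /allP /(_ y (mem_index_enum y)) /implyP /(_ isT).
by rewrite sqrf_eq0 subr_eq0 => /eqP.
Qed.

Lemma zcomp {R : realType} {X : Type} {Y : finType} {M : nat} (y0 : Y)
  (f : X -> 'rV[R]_M) (g : Y -> 'rV[R]_M) (ys : 'I_M -> Y) x k :
  (f x *m \matrix_(k0, i) (g (ys i) - g y0) ord0 k0) ord0 k =
  ln (model_p f g x (ys k)) - ln (model_p f g x y0) + 0.
Proof.
rewrite !(lnp y0) addr0 /dotv mxE.
rewrite (_ : forall a b c : R, a - c - (b - c) = a - b); last by move=> a b c; ring.
rewrite -sumrB; apply: eq_bigr => i _; rewrite !mxE; ring.
Qed.

Lemma wcomp {R : realType} {X : Type} {Y : finType} {M : nat} (y0 : Y)
  (f : X -> 'rV[R]_M) (g : Y -> 'rV[R]_M) (xs : 'I_M -> X) x0 y k :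
  (g y *m \matrix_(k0, i) (f (xs i) - f x0) ord0 k0) ord0 k =
  ln (model_p f g (xs k) y) - ln (model_p f g x0 y) +
  (ln (\sum_(y' : Y) expR (dotv (f (xs k)) (g y'))) - ln (\sum_(y' : Y) expR (dotv (f x0) (g y')))).
Proof.
rewrite !(lnp y0) /dotv mxE.
rewrite (_ : forall a b c d : R, a - c - (b - d) + (c - d) = a - b); last by move=> a b c d; ring.
rewrite -sumrB; apply: eq_bigr => i _; rewrite !mxE; ring.
Qed.
Lemma gemaxr {R : realType} (a b c : R) : (Num.max a b <= c) = (a <= c) && (b <= c).
Proof. exact: ge_max. Qed.
Lemma le_bigmaxr_fin {R : realType} (I : finType) (A : {set I}) (F : I -> R) j :
  j \in A -> F j <= \big[Num.max/0]_(i in A) F i.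
Proof. move=> h. exact: (@le_bigmax_cond _ R I 0 j (fun i => i \in A) F h). Qed.
Lemma le_bigmaxr_seq {R : realType} (I : eqType) (r : seq I) (Q : pred I) (F : I -> R) j :
  j \in r -> Q j -> F j <= \big[Num.max/0]_(i <- r | Q i) F i.
Proof. move=> h1 h2. exact: (@le_bigmax_seq _ R I r 0 j Q F h1 h2). Qed.
Lemma maxle {R : realType} (a b c : R) : Num.max a b <= c -> a <= c /\ b <= c.
Proof. by rewrite gemaxr => /andP. Qed.
Lemma maxle2 {R : realType} (a b c : R) : a <= c -> b <= c -> Num.max a b <= c.
Proof. by rewrite gemaxr => -> ->. Qed.

Unset Implicit Arguments.

Theorem mainTheorem10 (R : realType) (d : measure_display) (X : measurableType d)
  (Y : finType) (M : nat) (P : probability X R)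
  (XLLV : seq X) (YLLV : {set Y}) (x0 : X) (y0 : Y)
  (f f' : X -> 'rV[R]_M) (g g' : Y -> 'rV[R]_M)
  (xs : 'I_M -> X) (ys : 'I_M -> Y) (lam eps : R)
  (U1 V1 U2 V2 : 'M[R]_M) (s1 s2 : 'rV[R]_M) :
  (0 < M)%N ->
  x0 \in XLLV -> y0 \in YLLV -> #|~: YLLV| = 1%N ->
  (* (1) *)
  injective ys -> (forall i, ys i \in YLLV :\ y0) ->
  injective xs -> (forall i, xs i \in XLLV /\ xs i != x0) ->
  let L  := \matrix_(k, i) (g  (ys i) - g  y0) ord0 k in
  let L' := \matrix_(k, i) (g' (ys i) - g' y0) ord0 k in
  let N  := \matrix_(k, i) (f  (xs i) - f  x0) ord0 k in
  let N' := \matrix_(k, i) (f' (xs i) - f' x0) ord0 k in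
  L \in unitmx -> L' \in unitmx -> N \in unitmx -> N' \in unitmx ->
  (* (2) *)
  let p  := model_p f g in
  let p' := model_p f' g' in
  admissible P XLLV YLLV x0 y0 p -> admissible P XLLV YLLV x0 y0 p' ->
  (* (3) *)
  let z1 := fun x => f x *m L in
  let z2 := fun x => f' x *m L' in
  let w1 := fun y => g y *m N in
  let w2 := fun y => g' y *m N' in
  crosscov (E_x P) z1 z1 \in unitmx -> crosscov (@E_unif R Y) w1 w1 \in unitmx ->
  crosscov (E_x P) z1 z2 \in unitmx -> crosscov (@E_unif R Y) w1 w2 \in unitmx ->
  (* SVDs of the two cross-covariance matrices *)
  is_svd (crosscov (E_x P) z1 z2) U1 s1 V1 ->
  is_svd (crosscov (@E_unif R Y) w1 w2) U2 s2 V2 ->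
  0 < lam -> 0 <= eps ->
  d_LLV P XLLV YLLV x0 y0 lam p p' <= eps ->
  Num.max (d_SVD (E_x P) z1 z2 U1 V1) (d_SVD (@E_unif R Y) w1 w2 U2 V2)
    <= 2 * M%:R * eps.
Proof.
move=> M0 x0in y0in cardY ysinj ysY xsinj xsX L L' N N' uL uL' uN uN' p p' adp adp'
  z1 z2 w1 w2 _ _ _ _ svd1 svd2 lam0 e0 hd.
move: hd; rewrite /d_LLV => /maxle [/maxle [ht1 ht2] _].
have okx := cov_ok_x P.
have oky := @cov_ok_unif R Y y0.
case: adp => [[ppos psq] [[_ pnc] pvar]].
case: adp' => [[ppos' psq'] [[_ pnc'] pvar']].
have L2 : forall y, (fun x => ln (p x y)) \in Lfun P 2%:E by move=> y; apply: sqint_L2; apply: psq.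
have L2' : forall y, (fun x => ln (p' x y)) \in Lfun P 2%:E by move=> y; apply: sqint_L2; apply: psq'.
have ez1 : forall k t, z1 t ord0 k = ln (p t (ys k)) - ln (p t y0) + 0.
  by move=> k t; apply: zcomp.
have ez2 : forall k t, z2 t ord0 k = ln (p' t (ys k)) - ln (p' t y0) + 0.
  by move=> k t; apply: zcomp.
have ew1 : forall k t, w1 t ord0 k = ln (p (xs k) t) - ln (p x0 t) +
  (ln (\sum_(y' : Y) expR (dotv (f (xs k)) (g y'))) - ln (\sum_(y' : Y) expR (dotv (f x0) (g y')))).
  by move=> k t; apply: (wcomp y0).
have ew2 : forall k t, w2 t ord0 k = ln (p' (xs k) t) - ln (p' x0 t) +
  (ln (\sum_(y' : Y) expR (dotv (f' (xs k)) (g' y'))) - ln (\sum_(y' : Y) expR (dotv (f' x0) (g' y')))).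
  by move=> k t; apply: (wcomp y0).
apply: maxle2.
- apply: (dsvd_bound okx M0 _ _ svd1 _ e0).
  + move=> k; apply: (G_stdz okx).
    apply: (@G_ext _ _ (fun a => a \in Lfun P 2%:E) (fun t => ln (p t (ys k)) - ln (p t y0) + 0)).
      by move=> t; rewrite ez1.
    exact: (G_diff okx 0).
  + move=> k; apply: (G_stdz okx).
    apply: (@G_ext _ _ (fun a => a \in Lfun P 2%:E) (fun t => ln (p' t (ys k)) - ln (p' t y0) + 0)).
      by move=> t; rewrite ez2.
    exact: (G_diff okx 0).
  move=> k; rewrite /stdzE.
  have hk := le_bigmaxr_fin (fun y => Num.max
      (Num.sqrt (Var_x P (fun x => ln (p x y) / psi_x P y0 p y
                               - ln (p' x y) / psi_x P y0 p' y)))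
      (Num.sqrt (Var_x P (fun x => ln (p x y0) / psi_x P y0 p y
                               - ln (p' x y0) / psi_x P y0 p' y)))) (ysY k).
  have [h1 h0] := maxle (le_trans hk ht1).
  rewrite /psi_x !VarxE in h1 h0.
  apply: (key okx (A1 := fun x => ln (p x (ys k))) (A0 := fun x => ln (p x y0))
     (B1 := fun x => ln (p' x (ys k))) (B0 := fun x => ln (p' x y0))
     (a := fun s => z1 s ord0 k) (b := fun s => z2 s ord0 k) (ka := 0) (kb := 0)).
  + exact: L2.
  + exact: L2.
  + exact: L2'.
  + exact: L2'.
  + move=> t /=; exact: (ez1 k t).
  + move=> t /=; exact: (ez2 k t).
  + by rewrite -VarxE; apply: pvar.
  + by rewrite -VarxE; apply: pvar'.
  + exact: h1.
  + exact: h0.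
apply: (dsvd_bound oky M0 _ _ svd2 _ e0) => //.
move=> k; rewrite /stdzE.
have [xk xk0] := xsX k.
have hk := @le_bigmaxr_seq _ _ XLLV (fun x => x != x0) (fun x => Num.max
      (Num.sqrt (Var_y (fun y => ln (p x y) / psi_y x0 p x
                               - ln (p' x y) / psi_y x0 p' x)))
      (Num.sqrt (Var_y (fun y => ln (p x0 y) / psi_y x0 p x
                               - ln (p' x0 y) / psi_y x0 p' x)))) _ xk xk0.
have [h1 h0] := maxle (le_trans hk ht2).
rewrite /psi_y !VaryE in h1 h0.
apply: (key oky (A1 := fun y => ln (p (xs k) y)) (A0 := fun y => ln (p x0 y))
   (B1 := fun y => ln (p' (xs k) y)) (B0 := fun y => ln (p' x0 y))
   (a := fun y => w1 y ord0 k) (b := fun y => w2 y ord0 k)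
   (ka := ln (\sum_(y' : Y) expR (dotv (f (xs k)) (g y'))) - ln (\sum_(y' : Y) expR (dotv (f x0) (g y'))))
   (kb := ln (\sum_(y' : Y) expR (dotv (f' (xs k)) (g' y'))) - ln (\sum_(y' : Y) expR (dotv (f' x0) (g' y'))))).
+ by [].
+ by [].
+ by [].
+ by [].
+ move=> t /=. exact: (ew1 k t).
+ exact: ew2.
+ by rewrite -VaryE; apply: (Vary_pos y0); apply: pnc.
+ by rewrite -VaryE; apply: (Vary_pos y0); apply: pnc'.
+ exact: h1.
+ exact: h0.
Qed.
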